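(* Let $\Gamma$ be a group and $S$ a $\Gamma$-graded inverse semigroup equipped with a non-degenerate partial action on a nonempty set $X$. If $S$ is strongly graded, then the groupoid of germs $S\ltimes X$ is strongly graded in the induced $\Gamma$-grading.
   Context: Semigroups have a zero; $S$ is $\Gamma$-graded via $\deg:S\setminus\{0\}\to\Gamma$ with $\deg(st)=\deg(s)\deg(t)$ whenever $st\neq0$; $S_\alpha=\deg^{-1}(\alpha)\cup\{0\}$; strongly graded: $S_\alpha S_\beta=S_{\alpha\beta}$. A partial action of $S$ on $X$ is a zero-preserving homomorphism $s\mapsto\theta_s$ from $S$ into the symmetric inverse monoid $\mathcal I(X)$ (partial bijections of $X$, zero the empty map); $X_s=\mathrm{Dom}(\theta_s)$; it is non-degenerate if $X=\bigcup_{e\in E(S)}X_e$. On $\{(s,x):s\in S,x\in X_s\}$ let $(s,x)\sim(t,y)$ iff $x=y$ and there is an idempotent $e$ with $x\in X_e$ and $se=te$; the class $[s,x]$ is the germ. $S\ltimes X$ is the set of germs, a groupoid with $\mathbf d([s,x])=x$, $\mathbf r([s,x])=\theta_s(x)$, $[s,x][t,y]=[st,y]$ when $x=\theta_t(y)$, $[s,x]^{-1}=[s^{-1},\theta_s(x)]$, unit space identified with $X$. Its induced grading is $[s,x]\mapsto\deg(s)$, with $(S\ltimes X)_\alpha$ the germs of degree $\alpha$. A graded groupoid $\mathscr G$ is strongly graded if $\mathscr G_\alpha\mathscr G_\beta=\mathscr G_{\alpha\beta}$ for all $\alpha,\beta$, where $AB=\{ab:a\in A,b\in B,\mathbf d(a)=\mathbf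 r(b)\}$. *)

(* Defs.v *)
Set Implicit Arguments.

Definition is_group (G : Type) (gmul : G -> G -> G) (gone : G) (ginv : G -> G)
  : Prop :=
  (forall a b c, gmul (gmul a b) c = gmul a (gmul b c)) /\
  (forall a, gmul gone a = a) /\ (forall a, gmul a gone = a) /\
  (forall a, gmul (ginv a) a = gone) /\ (forall a, gmul a (ginv a) = gone).

Definition is_inverse_semigroup_with_zero (S : Type) (smul : S -> S -> S)
  (szero : S) : Prop :=
  (forall a b c, smul (smul a b) c = smul a (smul b c)) /\
  (forall a, smul szero a = szero) /\ (forall a, smul a szero = szero) /\
  (forall s, exists t, (smul (smul s t) s = s /\ smul (smul t s) t = t) /\
     forall t', smul (smul s t') s = s /\ smul (smul t' s) t' = t' -> t' = t).

Definition idempotent (S : Type) (smul : S -> S -> S) (e : S) : Prop :=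
  smul e e = e.

(** Gamma-grading: deg : S \ {0} -> Gamma (value at 0 irrelevant). *)
Definition is_grading (S G : Type) (smul : S -> S -> S) (szero : S)
  (gmul : G -> G -> G) (deg : S -> G) : Prop :=
  forall s t, smul s t <> szero -> deg (smul s t) = gmul (deg s) (deg t).

Definition homog (S G : Type) (szero : S) (deg : S -> G) (a : G) (s : S)
  : Prop := s = szero \/ (s <> szero /\ deg s = a).

Definition strongly_graded_semigroup (S G : Type) (smul : S -> S -> S)
  (szero : S) (gmul : G -> G -> G) (deg : S -> G) : Prop :=
  forall a b u, homog szero deg (gmul a b) u <->
    exists s t, homog szero deg a s /\ homog szero deg b t /\ u = smul s t.

(** Partial bijections of X (elements of the symmetric inverse monoid),
    represented as injective partial functions X -> option X. *)
Definition pcomp (X : Type) (f g : X -> option X) (x : X) : option X :=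
  match g x with Some y => f y | None => None end.

Definition partial_injection (X : Type) (f : X -> option X) : Prop :=
  forall x x' y, f x = Some y -> f x' = Some y -> x = x'.

Definition is_partial_action (S X : Type) (smul : S -> S -> S) (szero : S)
  (theta : S -> X -> option X) : Prop :=
  (forall s, partial_injection (theta s)) /\
  (forall s t x, theta (smul s t) x = pcomp (theta s) (theta t) x) /\
  (forall x, theta szero x = None).

Definition non_degenerate (S X : Type) (smul : S -> S -> S)
  (theta : S -> X -> option X) : Prop :=
  forall x, exists e, idempotent smul e /\ theta e x <> None.

(** Germs.  A germ is represented by a pair (s, x) with x ∈ X_s; the groupoid
    S ⋉ X is the set of such pairs modulo germ_equiv. *)
Definition germ_rep (S X : Type) (theta : S -> X -> option X) (s : S) (x : X)
  : Prop := theta s x <> None.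

Definition germ_equiv (S X : Type) (smul : S -> S -> S)
  (theta : S -> X -> option X) (p q : S * X) : Prop :=
  snd p = snd q /\
  exists e, idempotent smul e /\ theta e (snd p) <> None /\
            smul (fst p) e = smul (fst q) e.

Definition germ_in_degree (S X G : Type) (theta : S -> X -> option X)
  (deg : S -> G) (a : G) (p : S * X) : Prop :=
  germ_rep theta (fst p) (snd p) /\ deg (fst p) = a.

(** d([s,x]) = r([t,y]), i.e. x = theta_t(y). *)
Definition germ_composable (S X : Type) (theta : S -> X -> option X)
  (p q : S * X) : Prop := theta (fst q) (snd q) = Some (snd p).

Definition germ_mul (S X : Type) (smul : S -> S -> S) (p q : S * X) : S * X :=
  (smul (fst p) (fst q), snd q).

(** The groupoid of germs is strongly graded:
    (S ⋉ X)_alpha (S ⋉ X)_beta = (S ⋉ X)_{alpha beta}, as sets of germs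
    (i.e. modulo germ_equiv). *)
Definition germ_groupoid_strongly_graded (S X G : Type) (smul : S -> S -> S)
  (gmul : G -> G -> G) (deg : S -> G) (theta : S -> X -> option X) : Prop :=
  forall a b (g : S * X), germ_rep theta (fst g) (snd g) ->
    (germ_in_degree theta deg (gmul a b) g <->
     exists p q, germ_in_degree theta deg a p /\ germ_in_degree theta deg b q /\
       germ_composable theta p q /\ germ_equiv smul theta (germ_mul smul p q) g).

(* Main.v *)
Require Import Defs.

Theorem proposition6p1
  (G : Type) (gmul : G -> G -> G) (gone : G) (ginv : G -> G)
  (S : Type) (smul : S -> S -> S) (szero : S) (deg : S -> G)
  (X : Type) (theta : S -> X -> option X) :
  is_group gmul gone ginv ->
  is_inverse_semigroup_with_zero smul szero ->
  is_grading smul szero gmul deg ->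
  is_partial_action smul szero theta ->
  non_degenerate smul theta ->
  inhabited X ->
  strongly_graded_semigroup smul szero gmul deg ->
  germ_groupoid_strongly_graded smul gmul deg theta.
Proof.
  intros [gA [g1l [g1r [gVl gVr]]]] _ Hgr [Hinj [Hhom H0]] Hnd _ Hsg.
  intros a b [s x] Hrep. unfold germ_rep in Hrep; simpl in Hrep.
  assert (Hnz : forall u y, theta u y <> None -> u <> szero).
  { intros u y H E. subst u. apply H, H0. }
  split.
  - intros [_ Hd]. simpl in Hd.
    assert (Hh : homog szero deg (gmul a b) s).
    { right. split; [exact (Hnz _ _ Hrep) | exact Hd]. }
    apply Hsg in Hh. destruct Hh as [s1 [t [Hs1 [Ht Es]]]].
    subst s. rewrite Hhom in Hrep. unfold pcomp in Hrep.
    destruct (theta t x) as [x1|] eqn:Etx; [|congruence].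
    destruct Hs1 as [Hs1|[_ Hs1]]; [subst s1; rewrite H0 in Hrep; congruence|].
    destruct Ht as [Ht|[_ Ht]]; [subst t; rewrite H0 in Etx; congruence|].
    exists (s1, x1), (t, x). repeat split; simpl; try assumption; try congruence.
    destruct (Hnd x) as [e [He Hex]]. exists e. auto.
  - intros [[s1 x1] [[t y] [[Hr1 Hd1] [[Hr2 Hd2] [Hc [Hy [e [He [Hex Heq]]]]]]]]].
    unfold germ_rep, germ_composable, germ_mul in *; simpl in *. subst y.
    split; [exact Hrep|]. simpl.
    assert (Eex : theta e x = Some x).
    { destruct (theta e x) as [z|] eqn:Ez; [|congruence].
      assert (theta e z = Some z).
      { unfold idempotent in He. pose proof (Hhom e e x) as Hc2.
        rewrite He in Hc2. unfold pcomp in Hc2. rewrite Ez in Hc2. congruence. }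
      f_equal. symmetry. apply (Hinj e x z z); assumption. }
    assert (N1 : theta (smul (smul s1 t) e) x <> None).
    { rewrite Hhom. unfold pcomp. rewrite Eex, Hhom. unfold pcomp. rewrite Hc. exact Hr1. }
    assert (N2 : theta (smul s e) x <> None).
    { rewrite <- Heq. exact N1. }
    assert (N3 : theta (smul s1 t) x <> None).
    { rewrite Hhom. unfold pcomp. rewrite Hc. exact Hr1. }
    pose proof (Hgr _ _ (Hnz _ _ N1)) as D1.
    pose proof (Hgr _ _ (Hnz _ _ N2)) as D2.
    pose proof (Hgr _ _ (Hnz _ _ N3)) as D3.
    rewrite Heq in D1. rewrite D1, D3, Hd1, Hd2 in D2.
    assert (K : gmul (gmul (deg s) (deg e)) (ginv (deg e)) =
                gmul (gmul (gmul a b) (deg e)) (ginv (deg e))) by (rewrite D2; reflexivity).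
    rewrite !gA, gVr, !g1r in K. exact K.
Qed.
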